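(* Let $\mathcal{H}$ be an infinite-dimensional separable Hilbert space with orthonormal bases $\{e_n\}$, $\{f_n\}$, $\mathcal{D}_e=\mathrm{span}\{e_n\}$, $\mathcal{D}_f=\mathrm{span}\{f_n\}$, $\mathcal{D}_e^2=\mathrm{span}\{|e_k\rangle\langle e_\ell|\}$. Let $\mathcal{Q}$ be a completely positive map from $\mathcal{D}_e^2$ into sesquilinear forms on $\mathcal{D}_f$, represented as $\mathcal{Q}(\rho)=\sum_\alpha K_\alpha\rho K_\alpha^\dagger$ by a countable family of generalized operators $K_\alpha$. If $\mathcal{Q}$ is trace preserving (each $\mathcal{Q}(\rho)$ is given by a trace class operator with trace equal to $\mathrm{Tr}\,\rho$), then each $K_\alpha$ extends to a bounded operator in $\mathcal{B}(\mathcal{H})$, and $K_\alpha^\dagger=K_\alpha^*$.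
   Context: A generalized operator $K$ is a linear map from $\mathcal{D}_e$ into the conjugate algebraic dual of $\mathcal{D}_f$; write $\langle f|K|e\rangle$ for the value of $Ke$ at $f\in\mathcal{D}_f$, and $\langle e|K^\dagger|f\rangle=\langle f|K|e\rangle^*$. The representation $\mathcal{Q}(\rho)=\sum_\alpha K_\alpha\rho K_\alpha^\dagger$ means $\langle g|\mathcal{Q}(|\phi\rangle\langle\phi'|)|f\rangle=\sum_\alpha\langle g|K_\alpha|\phi\rangle\langle f|K_\alpha|\phi'\rangle^*$ for $\phi,\phi'\in\mathcal{D}_e$, $f,g\in\mathcal{D}_f$. Complete positivity: $\sum_{k,\ell}\langle\psi_k|\mathcal{Q}(|\phi_k\rangle\langle\phi_\ell|)|\psi_\ell\rangle\ge0$ for all finite families $\phi_k\in\mathcal{D}_e$, $\psi_k\in\mathcal{D}_f$. $K_\alpha^*$ denotes the Hilbert space adjoint of the bounded extension. *)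

(* Defs.v *)
(* Complex scalars: R[i] (real_closed
   complex numbers) over an abstract R : realType.  The separable
   infinite-dimensional Hilbert space is modelled concretely as l^2(N; C). *)
From HB Require Import structures.
From mathcomp Require Import all_boot all_order all_algebra.
From mathcomp Require Import complex.
From mathcomp Require Import classical_sets boolp reals topology normedtype sequences.
Import Order.TTheory GRing.Theory Num.Theory.
Import numFieldNormedType.Exports.

Set Implicit Arguments.
Unset Strict Implicit.
Unset Printing Implicit Defensive.

Local Open Scope ring_scope.
Local Open Scope complex_scope.

(* The normed (hence topological) structure of a numField, copied onto R[i],
   so that limits of complex sequences/series make sense. *)
Section ComplexNormed.
Variable R : realType.
HB.instance Definition _ := NormedModule.copy R[i] (R[i] : numClosedFieldType)^o.
End ComplexNormed.

Section Hilbert.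
Variable R : realType.
Local Notation C := (R[i]).

Definition vec := nat -> C.
Definition l2 (x : vec) : Prop := cvgn (series (fun n => `|x n| ^+ 2)).

Definition inner (x y : vec) : C := limn (series (fun n => (x n)^* * y n)).

Definition op := vec -> vec.

Definition is_bounded (B : op) : Prop :=
  (forall x, l2 x -> l2 (B x)) /\
  (forall (x y : vec) (z : C), l2 x -> l2 y ->
      B (fun n => x n + z * y n) = (fun n => B x n + z * B y n)) /\
  (exists M : R, forall x, l2 x -> inner (B x) (B x) <= M%:C * inner x x).

Definition is_adjoint (B Bs : op) : Prop :=
  is_bounded Bs /\
  (forall x y, l2 x -> l2 y -> inner (Bs y) x = inner y (B x)).

Definition is_ONB (u : nat -> vec) : Prop :=
  (forall n, l2 (u n)) /\
  (forall m n, inner (u m) (u n) = (m == n)%:R) /\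
  (forall x, l2 x -> (forall n, inner (u n) x = 0) -> x = (fun _ => 0)).

Definition is_positive (P : op) : Prop :=
  forall x, l2 x -> 0 <= inner x (P x).

(* T is trace class: T bounded and Tr |T| < oo, where |T| = P is the positive
   square root of T^* T, the trace being computed in the orthonormal basis u *)
Definition trace_class (u : nat -> vec) (T : op) : Prop :=
  is_bounded T /\
  exists Ts P : op, is_adjoint T Ts /\ is_bounded P /\ is_positive P /\
    (forall x, l2 x -> P (P x) = Ts (T x)) /\
    cvgn (series (fun n => inner (u n) (P (u n)))).

Definition trace (u : nat -> vec) (T : op) : C :=
  limn (series (fun n => inner (u n) (T (u n)))).

(* An element of D_e = span{e_n} (resp. D_f) is given by a finite
   coefficient list a, standing for sum_n a`_n e_n.  A generalized operator
   K : D_e -> (D_f)^x (conjugate algebraic dual) is determined by, and freely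
   given by, its matrix K m n = <f_m|K|e_n>; likewise a sesquilinear form F on
   D_f is given by its matrix F m n = <f_m|F|f_n>.  [sandw F g a] is
   <g|F|a> = sum_{m,n} conj(g_m) F m n a_n. *)
Definition mat := nat -> nat -> C.

Definition sandw (F : mat) (g a : seq C) : C :=
  \sum_(m < size g) \sum_(n < size a) ((g`_m)^* * F m n * a`_n).

(* coefficients of |phi><phi'| in the basis |e_k><e_l| of D_e^2 *)
Definition rank1 (a b : seq C) : mat := fun k l => a`_k * (b`_l)^*.

(* c is the coefficient matrix of an element sum_{k,l<N} c k l |e_k><e_l| of D_e^2 *)
Definition supported (N : nat) (c : mat) : Prop :=
  forall k l, (N <= k)%N \/ (N <= l)%N -> c k l = 0.

End Hilbert.

(* Main.v *)
Require Import Defs.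
From HB Require Import structures.
From mathcomp Require Import all_boot all_order all_algebra.
From mathcomp Require Import complex.
From mathcomp Require Import classical_sets boolp reals topology normedtype sequences.
From mathcomp Require Import ring lra.
Import Order.TTheory GRing.Theory Num.Theory.
Import numFieldNormedType.Exports.
Local Open Scope ring_scope.
Local Open Scope complex_scope.
Local Open Scope classical_set_scope.
Set Implicit Arguments.
Unset Strict Implicit.
Unset Printing Implicit Defensive.
Section Bridge.
Variable R : realType.
Local Notation C := (R[i]).

Lemma normC_real (x : R) : `|x%:C| = `|x|%:C.
Proof. rewrite normc_def /= expr0n /= addr0 sqrtr_sqr //. Qed.

Lemma cvg_realC (u : nat -> R) (l : R) : u @ \oo --> l -> (fun n => (u n)%:C : C) @ \oo --> l%:C.
Proof.
move=> /cvgrPdist_lt H; apply/cvgrPdist_lt => -[a b].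
rewrite ltcE /= => /andP[/eqP b0 a0]; subst b.
near=> n. rewrite -rmorphB normC_real ltcR. near: n. exact: H.
Unshelve. all: by end_near. Qed.

Lemma normRe_le (z : C) : (`|complex.Re z|)%:C <= `|z|.
Proof.
rewrite normc_def lecR -sqrtr_sqr. apply: ler_wsqrtr.
by rewrite lerDl sqr_ge0.
Qed.
Lemma normIm_le (z : C) : (`|complex.Im z|)%:C <= `|z|.
Proof.
rewrite normc_def lecR -sqrtr_sqr. apply: ler_wsqrtr.
by rewrite lerDr sqr_ge0.
Qed.

Lemma ReB (x y : C) : complex.Re (x - y) = complex.Re x - complex.Re y.
Proof. by case: x y => ? ? [? ?]. Qed.
Lemma ImB (x y : C) : complex.Im (x - y) = complex.Im x - complex.Im y.
Proof. by case: x y => ? ? [? ?]. Qed.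

Lemma cvgC (u : nat -> C) (l : C) : u @ \oo --> l <->
  ((fun n => complex.Re (u n)) @ \oo --> complex.Re l /\ (fun n => complex.Im (u n)) @ \oo --> complex.Im l).
Proof.
split.
- move=> /cvgrPdist_lt H; split; apply/cvgrPdist_lt => e e0.
  + near=> n. rewrite -ReB -ltcR. apply: le_lt_trans (normRe_le (l - u n)) _.
    near: n. by apply: H; rewrite ltcR.
  + near=> n. rewrite -ImB -ltcR. apply: le_lt_trans (normIm_le (l - u n)) _.
    near: n. by apply: H; rewrite ltcR.
- move=> [H1 H2].
  have -> : u = (fun n => (complex.Re (u n))%:C + 'i * (complex.Im (u n))%:C).
    by apply: funext => n; rewrite -complexE.
  rewrite [l]complexE. apply: cvgD; first exact: cvg_realC.
  apply: cvgM; [exact: cvg_cst | exact: cvg_realC].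
Unshelve. all: by end_near. Qed.
End Bridge.
Section Base.
Variable R : realType.
Local Notation C := (R[i]).
Local Notation re := (@complex.Re R).
Local Notation im := (@complex.Im R).

Definition sq (z : C) : R := re z ^+ 2 + im z ^+ 2.
Definition ab (z : C) : R := `|re z| + `|im z|.

Lemma sq_ge0 z : 0 <= sq z. Proof. by rewrite /sq addr_ge0 ?sqr_ge0. Qed.
Lemma ab_ge0 z : 0 <= ab z. Proof. by rewrite /ab addr_ge0. Qed.

Lemma conjM_sq (z : C) : z^* * z = (sq z)%:C.
Proof. case: z => a b; rewrite /sq /= /conjc; simpc. congr (_ +i* _); ring. Qed.

Lemma reD (x y : C) : re (x + y) = re x + re y. Proof. by case: x y => ? ? [? ?]. Qed.
Lemma imD (x y : C) : im (x + y) = im x + im y. Proof. by case: x y => ? ? [? ?]. Qed.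
Lemma re0 : re 0 = 0. Proof. by []. Qed.
Lemma im0 : im 0 = 0. Proof. by []. Qed.
Lemma re_sum (F : nat -> C) n : re (\sum_(0 <= k < n) F k) = \sum_(0 <= k < n) re (F k).
Proof. elim: n => [|n IH]; first by rewrite !big_geq. by rewrite !big_nat_recr //= reD IH. Qed.
Lemma im_sum (F : nat -> C) n : im (\sum_(0 <= k < n) F k) = \sum_(0 <= k < n) im (F k).
Proof. elim: n => [|n IH]; first by rewrite !big_geq. by rewrite !big_nat_recr //= imD IH. Qed.

Lemma series_cvgC (u : nat -> C) (l : C) : series u @ \oo --> l <->
  (series (fun n => re (u n)) @ \oo --> re l /\ series (fun n => im (u n)) @ \oo --> im l).
Proof.
rewrite cvgC.
have -> : (fun n => re (series u n)) = series (fun n => re (u n)).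
  by apply: funext => n; rewrite /series /= re_sum.
have -> : (fun n => im (series u n)) = series (fun n => im (u n)).
  by apply: funext => n; rewrite /series /= im_sum.
done.
Qed.

Lemma mono_series (u : nat -> R) M : (forall n, 0 <= u n) ->
  (forall N, series u N <= M) ->
  cvgn (series u) /\ (forall N, series u N <= limn (series u)) /\ limn (series u) <= M.
Proof.
move=> u0 uM.
have nd : nondecreasing_seq (series u).
  by move=> m n mn; apply: (@nondecreasing_series _ u xpredT 0) => // k _ _; apply: u0.
have cv : cvgn (series u).
  apply: nondecreasing_is_cvgn => //; exists M => _ [n _ <-]; exact: uM.
split => //; split; first exact: nondecreasing_cvgn_le.
apply: limr_le => //; near=> n; exact: uM.
Unshelve. all: by end_near. Qed.

Lemma cvg_absR (u : nat -> R) M : (forall N, series (fun n => `|u n|) N <= M) -> cvgn (series u).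
Proof.
move=> H. apply: (@normed_cvg R R^o).
have [cv _] := @mono_series (fun n => `|u n|) M (fun n => normr_ge0 _) H.
exact: cv.
Qed.

Lemma cvg_abs (u : nat -> C) M : (forall N, series (fun n => ab (u n)) N <= M) -> cvgn (series u).
Proof.
move=> H.
have H1 : cvgn (series (fun n => re (u n))).
  apply: (@cvg_absR _ M) => N; apply: le_trans (H N).
  rewrite /series /=; apply: ler_sum => i _; rewrite /ab lerDl //.
have H2 : cvgn (series (fun n => im (u n))).
  apply: (@cvg_absR _ M) => N; apply: le_trans (H N).
  rewrite /series /=; apply: ler_sum => i _; rewrite /ab lerDr //.
apply/cvg_ex; exists (limn (series (fun n => re (u n))) +i* limn (series (fun n => im (u n)))).
by apply/series_cvgC; split; [exact: H1 | exact: H2].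
Qed.
End Base.

Section L2.
Variable R : realType.
Local Notation C := (R[i]).
Local Notation re := (@complex.Re R).
Local Notation im := (@complex.Im R).
Local Notation vec := (vec R).

Lemma series0 : series (fun _ : nat => (0 : R)) = (fun _ => 0).
Proof. by apply: funext => n; rewrite /series /= big1. Qed.

Lemma cvg_seriesR (u : nat -> R) (l : R) : series u @ \oo --> l ->
  series (fun n => (u n)%:C : C) @ \oo --> l%:C.
Proof.
move=> H; apply/series_cvgC; split => //=.
rewrite (_ : (fun n => im (u n)%:C) = fun=> 0) //; rewrite series0; exact: cvg_cst.
Qed.

Lemma cvg_seriesR' (u : nat -> R) (l : C) : series (fun n => (u n)%:C : C) @ \oo --> l ->
  series u @ \oo --> re l.
Proof. by move/series_cvgC => []. Qed.

Definition nrm (x : vec) : R := limn (series (fun n => sq (x n))).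

Lemma normsq (z : C) : `|z| ^+ 2 = (sq z)%:C.
Proof. by rewrite -add_Re2_Im2. Qed.

Lemma l2P (x : vec) : l2 x <-> exists M, forall N, series (fun n => sq (x n)) N <= M.
Proof.
rewrite /l2 (_ : (fun n => `|x n| ^+ 2) = (fun n => (sq (x n))%:C)); last first.
  by apply: funext => n; rewrite normsq.
split.
- move=> /cvg_ex [l /cvg_seriesR' H]. exists (re l) => N.
  have nd : nondecreasing_seq (series (fun n => sq (x n))).
    by move=> m n mn; apply: (@nondecreasing_series _ _ xpredT 0) => // k _ _; apply: sq_ge0.
  rewrite -(cvg_lim _ H) //; apply: nondecreasing_cvgn_le => //; exact: cvgP H.
- move=> [M HM]; have [cv _] := mono_series (fun n => sq_ge0 (x n)) HM.
  apply/cvg_ex; eexists; apply: cvg_seriesR; exact: cv.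
Qed.

Lemma nrm_facts (x : vec) : l2 x ->
  series (fun n => sq (x n)) @ \oo --> nrm x /\
  (forall N, series (fun n => sq (x n)) N <= nrm x) /\ 0 <= nrm x.
Proof.
move=> /l2P [M HM]; have [cv [H1 H2]] := mono_series (fun n => sq_ge0 (x n)) HM.
split => //; split => //. by apply: le_trans (H1 0%N); rewrite /series /= big_geq.
Qed.

Lemma nrm_le (x : vec) M : (forall N, series (fun n => sq (x n)) N <= M) -> nrm x <= M.
Proof. by move=> HM; have [_ [_ H2]] := mono_series (fun n => sq_ge0 (x n)) HM. Qed.

Lemma l2_bound (x : vec) M : (forall N, series (fun n => sq (x n)) N <= M) -> l2 x /\ nrm x <= M.
Proof. by move=> HM; split; [apply/l2P; exists M | exact: nrm_le]. Qed.

Lemma abs_poly (a b c d t : R) : 0 <= t ->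
  t * (`|a * c + b * d| + `|a * d - b * c|) <= t ^+ 2 * (a ^+ 2 + b ^+ 2) + (c ^+ 2 + d ^+ 2).
Proof.
move=> t0.
have h1 : t * `|a * c + b * d| <= (t ^+ 2 * (a ^+ 2 + b ^+ 2) + (c ^+ 2 + d ^+ 2)) / 2.
  have e : `|t * (a * c + b * d)| <= (t ^+ 2 * (a ^+ 2 + b ^+ 2) + (c ^+ 2 + d ^+ 2)) / 2.
    have := sqr_ge0 (t * a - c); have := sqr_ge0 (t * b - d).
    have := sqr_ge0 (t * a + c); have := sqr_ge0 (t * b + d).
    move=> *; rewrite ler_norml; apply/andP; split; nra.
  by rewrite normrM (ger0_norm t0) in e.
have h2 : t * `|a * d - b * c| <= (t ^+ 2 * (a ^+ 2 + b ^+ 2) + (c ^+ 2 + d ^+ 2)) / 2.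
  have e : `|t * (a * d - b * c)| <= (t ^+ 2 * (a ^+ 2 + b ^+ 2) + (c ^+ 2 + d ^+ 2)) / 2.
    have := sqr_ge0 (t * a - d); have := sqr_ge0 (t * b + c).
    have := sqr_ge0 (t * a + d); have := sqr_ge0 (t * b - c).
    move=> *; rewrite ler_norml; apply/andP; split; nra.
  by rewrite normrM (ger0_norm t0) in e.
lra.
Qed.

Lemma ab_conjM (x y : C) t : 0 <= t -> t * ab (x^* * y) <= t ^+ 2 * sq x + sq y.
Proof.
case: x y => a b [c d] t0; rewrite /ab /sq /=.
have -> : a * c - - b * d = a * c + b * d by ring.
have -> : a * d + - b * c = a * d - b * c by ring.
exact: abs_poly.
Qed.

Lemma ab_mul (x y : C) : ab (x * y) <= sq x + sq y.
Proof.
case: x y => a b [c d]; rewrite /ab /sq /=.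
have := @abs_poly a (- b) c d 1 ler01; rewrite !mul1r expr1n mul1r sqrrN.
have -> : a * c + - b * d = a * c - b * d by ring.
have -> : a * d - - b * c = a * d + b * c by ring.
done.
Qed.

Lemma abD (x y : C) : ab (x + y) <= ab x + ab y.
Proof.
rewrite /ab reD imD.
have := ler_normD (re x) (re y); have := ler_normD (im x) (im y); lra.
Qed.

Lemma ab_sum (F : nat -> C) n : ab (\sum_(0 <= k < n) F k) <= \sum_(0 <= k < n) ab (F k).
Proof.
elim: n => [|n IH]; first by rewrite !big_geq // /ab /= normr0 addr0.
rewrite !big_nat_recr //=; apply: le_trans (abD _ _) _; lra.
Qed.

Lemma ab_cvg (u : nat -> C) (l : C) : u @ \oo --> l -> (fun n => ab (u n)) @ \oo --> ab l.
Proof.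
move=> /cvgC [H1 H2]; apply: cvgD; apply: cvg_norm; [exact: H1 | exact: H2].
Qed.

Lemma l2_bnd (x : vec) : l2 x -> exists M, forall N, series (fun n => sq (x n)) N <= M.
Proof. by move/l2P. Qed.

Lemma limnC (u : nat -> C) (l : C) : u @ \oo --> l -> limn u = l.
Proof. move=> H; exact: (cvg_lim (F := \oo) _ H). Qed.

Lemma inner_cvg (x y : vec) : l2 x -> l2 y ->
  series (fun n => (x n)^* * y n) @ \oo --> inner x y.
Proof.
move=> /l2_bnd [Mx Hx] /l2_bnd [My Hy].
have : cvgn (series (fun n => (x n)^* * y n)); last by move=> h; exact: h.
apply: (@cvg_abs _ _ (Mx + My)) => N.
apply: le_trans (lerD (Hx N) (Hy N)); rewrite /series /= -big_split /=.
apply: ler_sum => i _; have := @ab_conjM (x i) (y i) 1 ler01; rewrite mul1r expr1n mul1r; done.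
Qed.

Lemma inner_bound (x y : vec) t : l2 x -> l2 y -> 0 <= t ->
  t * ab (inner x y) <= t ^+ 2 * nrm x + nrm y.
Proof.
move=> lx ly t0.
have [_ [Nx _]] := nrm_facts lx; have [_ [Ny _]] := nrm_facts ly.
apply: (@cvgr_to_le _ \oo _ _ (fun N => t * ab (series (fun n => (x n)^* * y n) N))).
  apply: (@cvgM R nat \oo _ (fun=> t) (fun N => ab (series (fun n => (x n)^* * y n) N))).
    exact: cvg_cst.
  apply: ab_cvg; exact: inner_cvg.
near=> N. apply: le_trans (lerD (ler_wpM2l (sqr_ge0 t) (Nx N)) (Ny N)).
apply: le_trans (ler_wpM2l t0 (ab_sum _ _)) _.
rewrite /series /= mulr_sumr mulr_sumr -big_split /=.
apply: ler_sum => i _; exact: ab_conjM.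
Unshelve. all: by end_near. Qed.

Lemma inner_self (x : vec) : l2 x -> inner x x = (nrm x)%:C.
Proof.
move=> lx; apply: limnC.
rewrite (_ : (fun n => (x n)^* * x n) = fun n => (sq (x n))%:C); last first.
  by apply: funext => n; rewrite conjM_sq.
apply: cvg_seriesR; have [h _] := nrm_facts lx; exact: h.
Qed.

Lemma sq_addle (x y : C) : sq (x + y) <= 2 * (sq x + sq y).
Proof. case: x y => a b [c d]; rewrite /sq /=. have := sqr_ge0 (a - c); have := sqr_ge0 (b - d); nra. Qed.
Lemma sq_mul (z x : C) : sq (z * x) = sq z * sq x.
Proof. case: z x => a b [c d]; rewrite /sq /=. ring. Qed.
Lemma sq_conj (x : C) : sq x^* = sq x.
Proof. case: x => a b; rewrite /sq /=. ring. Qed.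
Lemma sq0 : sq (0 : C) = 0. Proof. by rewrite /sq /= expr0n /= addr0. Qed.

Lemma l2_lin (x y : vec) (z : C) : l2 x -> l2 y -> l2 (fun n => x n + z * y n).
Proof.
move=> /l2_bnd [Mx Hx] /l2_bnd [My Hy]; apply/l2P; exists (2 * (Mx + sq z * My)) => N.
apply: le_trans (_ : 2 * (series (fun n => sq (x n)) N + sq z * series (fun n => sq (y n)) N) <= _).
  rewrite /series /= mulr_sumr -big_split /= mulr_sumr; apply: ler_sum => i _.
  by rewrite -sq_mul; apply: sq_addle.
by rewrite ler_pM2l // lerD // ler_wpM2l ?sq_ge0.
Qed.

Lemma l2_0 : l2 (fun _ : nat => 0 : C).
Proof. apply/l2P; exists 0 => N; rewrite /series /= big1 // => i _; exact: sq0. Qed.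

Lemma series_lin (f g : nat -> C) (z : C) :
  series (fun n => f n + z * g n) = (fun N => series f N + z * series g N).
Proof. apply: funext => N; rewrite /series /= big_split /= mulr_sumr. done. Qed.

Lemma cvg_lin (f g : nat -> C) (a b z : C) : f @ \oo --> a -> g @ \oo --> b ->
  (fun n => f n + z * g n) @ \oo --> a + z * b.
Proof. move=> Hf Hg; apply: cvgD; first exact: Hf. apply: cvgM; [exact: cvg_cst | exact: Hg]. Qed.

Lemma innerDr (w x y : vec) (z : C) : l2 w -> l2 x -> l2 y ->
  inner w (fun n => x n + z * y n) = inner w x + z * inner w y.
Proof.
move=> lw lx ly; apply: limnC.
rewrite (_ : (fun n => (w n)^* * (x n + z * y n)) = fun n => (w n)^* * x n + z * ((w n)^* * y n)); last first.
  by apply: funext => n; ring.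
rewrite series_lin; apply: cvg_lin; exact: inner_cvg.
Qed.

Lemma innerDl (w x y : vec) (z : C) : l2 w -> l2 x -> l2 y ->
  inner (fun n => x n + z * y n) w = inner x w + z^* * inner y w.
Proof.
move=> lw lx ly; apply: limnC.
rewrite (_ : (fun n => (x n + z * y n)^* * w n) = fun n => (x n)^* * w n + z^* * ((y n)^* * w n)); last first.
  by apply: funext => n; rewrite rmorphD rmorphM; ring.
rewrite series_lin; apply: cvg_lin; exact: inner_cvg.
Qed.

Lemma conj_cvg (u : nat -> C) (l : C) : u @ \oo --> l -> (fun n => (u n)^*) @ \oo --> l^*.
Proof.
move=> /cvgC [H1 H2]; apply/cvgC; split.
- rewrite (_ : (fun n => re (u n)^*) = fun n => re (u n)); last by apply: funext => n; case: (u n).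
  by case: l H1 H2.
- rewrite (_ : (fun n => im (u n)^*) = fun n => - im (u n)); last by apply: funext => n; case: (u n).
  case: l H1 H2 => a b /= _ H2; exact: cvgN.
Qed.

Lemma innerC (x y : vec) : l2 x -> l2 y -> inner y x = (inner x y)^*.
Proof.
move=> lx ly; apply: limnC.
rewrite (_ : series (fun n => (y n)^* * x n) = fun N => (series (fun n => (x n)^* * y n) N)^*).
  apply: conj_cvg; exact: inner_cvg.
apply: funext => N; rewrite /series /= rmorph_sum; apply: eq_bigr => i _.
case: (x i) (y i) => a b [c d]; rewrite /=; congr (_ +i* _); ring.
Qed.
End L2.

Section Lin.
Variable R : realType.
Local Notation C := (R[i]).
Local Notation re := (@complex.Re R).
Local Notation im := (@complex.Im R).
Local Notation vec := (vec R).

Lemma inner0r (w : vec) : inner w (fun _ => 0) = 0.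
Proof.
apply: limnC; rewrite (_ : series _ = fun _ => 0); first exact: cvg_cst.
by apply: funext => N; rewrite /series /= big1 // => i _; rewrite mulr0.
Qed.
Lemma inner0l (w : vec) : inner (fun _ => 0) w = 0.
Proof.
apply: limnC; rewrite (_ : series _ = fun _ => 0); first exact: cvg_cst.
by apply: funext => N; rewrite /series /= big1 // => i _; rewrite rmorph0 mul0r.
Qed.

Definition lin (c : nat -> C) (u : nat -> vec) (M : nat) : vec :=
  fun p => \sum_(0 <= m < M) c m * u m p.

Variable u : nat -> vec.
Hypothesis ul2 : forall n, l2 (u n).
Hypothesis uon : forall m n, inner (u m) (u n) = (m == n)%:R.

Lemma linS c M : lin c u M.+1 = fun p => lin c u M p + c M * u M p.
Proof. by apply: funext => p; rewrite /lin big_nat_recr. Qed.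
Lemma lin0 c : lin c u 0 = fun _ => 0.
Proof. by apply: funext => p; rewrite /lin big_geq. Qed.

Lemma l2_comb c M : l2 (lin c u M).
Proof.
elim: M => [|M IH]; first by rewrite lin0; exact: l2_0.
rewrite linS; apply: l2_lin; [exact: IH | exact: ul2].
Qed.

Lemma inner_comb_r (w : vec) c M : l2 w ->
  inner w (lin c u M) = \sum_(0 <= m < M) c m * inner w (u m).
Proof.
move=> lw; elim: M => [|M IH]; first by rewrite lin0 inner0r big_geq.
rewrite linS innerDr; [|exact: lw|exact: l2_comb|exact: ul2].
by rewrite IH big_nat_recr.
Qed.

Lemma inner_comb_l (w : vec) c M : l2 w ->
  inner (lin c u M) w = \sum_(0 <= m < M) (c m)^* * inner (u m) w.
Proof.
move=> lw; elim: M => [|M IH]; first by rewrite lin0 inner0l big_geq.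
rewrite linS innerDl; [|exact: lw|exact: l2_comb|exact: ul2].
by rewrite IH big_nat_recr.
Qed.

Lemma sum_delta (F : nat -> C) m M :
  \sum_(0 <= k < M) F k * (m == k)%:R = if (m < M)%N then F m else 0.
Proof.
elim: M => [|M IH]; first by rewrite big_geq.
rewrite big_nat_recr //= IH.
have [->|ne] := eqVneq m M.
  by rewrite ltnn leqnn mulr1 add0r.
have -> : (m < M.+1)%N = (m < M)%N by rewrite ltnS leq_eqVlt (negPf ne).
by rewrite mulr0 addr0.
Qed.

Lemma inner_u_comb m c M : inner (u m) (lin c u M) = if (m < M)%N then c m else 0.
Proof. by rewrite inner_comb_r // -sum_delta; apply: eq_bigr => k _; rewrite uon. Qed.

Lemma inner_comb_comb c d M :
  inner (lin c u M) (lin d u M) = \sum_(0 <= m < M) (c m)^* * d m.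
Proof.
rewrite inner_comb_l; last exact: l2_comb.
apply: eq_big_nat => m /andP[_ hm]; by rewrite inner_u_comb hm.
Qed.

Definition coef (x : vec) : vec := fun n => inner (u n) x.

Lemma bessel (x : vec) N : l2 x -> \sum_(0 <= n < N) sq (coef x n) <= nrm x.
Proof.
move=> lx.
set P := lin (coef x) u N.
have lP : l2 P by exact: l2_comb.
set y := fun p => x p + (-1) * P p.
have ly : l2 y by apply: l2_lin; [exact: lx | exact: lP].
have e1 : inner x y = (nrm x)%:C - \sum_(0 <= m < N) (sq (coef x m))%:C.
  rewrite /y (innerDr _ lx lx lP) (inner_self lx) (inner_comb_r (coef x) N lx); congr (_ + _).
  rewrite mulN1r; congr (- _); apply: eq_bigr => m _.
  by rewrite (innerC (@ul2 m) lx) -conjM_sq mulrC.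
have e2 : inner P y = 0.
  rewrite /y (innerDr _ lP lx lP) inner_comb_comb (inner_comb_l (coef x) N lx).
  by rewrite mulN1r /coef subrr.
have e3 : inner y y = (nrm x)%:C - \sum_(0 <= m < N) (sq (coef x m))%:C.
  by rewrite {1}/y (innerDl _ ly lx lP) e1 e2 mulr0 addr0.
have [_ [_ ny]] := nrm_facts ly.
move: e3; rewrite (inner_self ly) -rmorph_sum -rmorphB => /complexI e3.
by rewrite -subr_ge0 -e3.
Qed.

Lemma coef_l2 (x : vec) : l2 x -> l2 (coef x) /\ nrm (coef x) <= nrm x.
Proof. move=> lx; apply: l2_bound => N; exact: bessel. Qed.

Lemma coef_lin (x y : vec) (z : C) : l2 x -> l2 y ->
  coef (fun n => x n + z * y n) = fun n => coef x n + z * coef y n.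
Proof. by move=> lx ly; apply: funext => n; rewrite /coef (innerDr _ (@ul2 n) lx ly). Qed.

Lemma coef_u m : coef (u m) = fun n => (n == m)%:R.
Proof. by apply: funext => n; rewrite /coef uon. Qed.
End Lin.

Section Tools.
Variable R : realType.
Local Notation C := (R[i]).
Local Notation re := (@complex.Re R).
Local Notation im := (@complex.Im R).
Local Notation vec := (vec R).

Lemma evconst_cvg (f : nat -> C) (c : C) M : (forall k, (M <= k)%N -> f k = c) -> f @ \oo --> c.
Proof.
move=> H; rewrite -(cvg_shiftn M).
rewrite (_ : (fun n => f (n + M)%N) = fun=> c); first exact: cvg_cst.
by apply: funext => n; apply: H; rewrite leq_addl.
Qed.

Lemma sq_cvg (f : nat -> C) (l : C) : f @ \oo --> l -> (fun k => sq (f k)) @ \oo --> sq l.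
Proof.
move=> /cvgC [H1 H2].
rewrite (_ : (fun k => sq (f k)) = (fun k => re (f k) * re (f k) + im (f k) * im (f k))); last first.
  by apply: funext => k; rewrite /sq !expr2.
rewrite (_ : sq l = re l * re l + im l * im l); last by rewrite /sq !expr2.
apply: cvgD; apply: cvgM; [exact: H1 | exact: H1 | exact: H2 | exact: H2].
Qed.

Lemma sum_cvg (g : nat -> nat -> R) (h : nat -> R) N :
  (forall n, (fun k => g k n) @ \oo --> h n) ->
  (fun k => \sum_(0 <= n < N) g k n) @ \oo --> \sum_(0 <= n < N) h n.
Proof.
move=> H; elim: N => [|N IH].
  rewrite big_geq //; rewrite (_ : (fun k => _) = fun=> 0); first exact: cvg_cst.
  by apply: funext => k; rewrite big_geq.
rewrite big_nat_recr //=; rewrite (_ : (fun k => _) = fun k => \sum_(0 <= n < N) g k n + g k N).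
  by apply: cvgD; [exact: IH | exact: H].
by apply: funext => k; rewrite big_nat_recr.
Qed.

Lemma fatou (x : nat -> vec) (z : vec) B :
  (forall p, (fun k => x k p) @ \oo --> z p) ->
  (forall k N, series (fun n => sq (x k n)) N <= B) ->
  forall N, series (fun n => sq (z n)) N <= B.
Proof.
move=> Hp HB N.
apply: (@cvgr_to_le _ \oo _ _ (fun k => series (fun n => sq (x k n)) N)).
  rewrite /series /=; apply: sum_cvg => n; apply: sq_cvg; exact: Hp.
near=> k; exact: HB.
Unshelve. all: by end_near. Qed.

Lemma ab_re (z : C) : `|re z| <= ab z. Proof. by rewrite /ab lerDl. Qed.
Lemma ab_im (z : C) : `|im z| <= ab z. Proof. by rewrite /ab lerDr. Qed.

Lemma ab_to0 (a : nat -> C) : (fun M => ab (a M)) @ \oo --> 0 -> a @ \oo --> 0.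
Proof.
move=> /cvgrPdist_le H; apply/cvgC; split => /=; apply/cvgrPdist_le => e e0.
- near=> M; rewrite sub0r normrN; apply: le_trans (ab_re _) _.
  have : `|0 - ab (a M)| <= e by near: M; exact: H.
  by rewrite sub0r normrN ger0_norm ?ab_ge0.
- near=> M; rewrite sub0r normrN; apply: le_trans (ab_im _) _.
  have : `|0 - ab (a M)| <= e by near: M; exact: H.
  by rewrite sub0r normrN ger0_norm ?ab_ge0.
Unshelve. all: by end_near. Qed.

Lemma small_cvg (a : nat -> C) (b : nat -> R) (c : R) :
  b @ \oo --> 0 -> 0 <= c ->
  (forall M t, 0 <= t -> t * ab (a M) <= t ^+ 2 * b M + c) -> a @ \oo --> 0.
Proof.
move=> /cvgrPdist_le Hb c0 H; apply: ab_to0; apply/cvgrPdist_le => e e0.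
set t := 2 * (c + 1) / e.
have t0 : 0 < t by rewrite /t divr_gt0 // mulr_gt0 // ltr_wpDl.
have eb : 0 < e / (2 * t) by rewrite divr_gt0 // mulr_gt0.
near=> M. rewrite sub0r normrN ger0_norm ?ab_ge0 //.
have h1 := H M t (ltW t0).
have h2 : `|0 - b M| <= e / (2 * t) by near: M; exact: Hb.
rewrite sub0r normrN in h2.
have h3 : b M <= e / (2 * t) := le_trans (ler_norm _) h2.
have tn : t != 0 by rewrite gt_eqF.
have en : e != 0 by rewrite gt_eqF.
have q1 : t ^+ 2 * (e / (2 * t)) = t * e / 2.
  by field; exact: tn.
have q2 : t * e / 2 = c + 1 by rewrite /t; field.
have h4 : t * ab (a M) <= t * e.
  apply: le_trans h1 _.
  have h5 : t ^+ 2 * b M <= t * e / 2 by rewrite -q1 ler_wpM2l ?sqr_ge0.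
  lra.
by rewrite ler_pM2l // in h4.
Unshelve. all: by end_near. Qed.
End Tools.

Section Syn.
Variable R : realType.
Local Notation C := (R[i]).
Local Notation re := (@complex.Re R).
Local Notation im := (@complex.Im R).
Local Notation vec := (vec R).

Definition delta (p : nat) : vec := fun n => (n == p)%:R.

Lemma sq_bool (b : bool) : sq (b%:R : C) = b%:R.
Proof. by case: b; rewrite /sq /= ?expr0n ?expr1n /= ?addr0. Qed.

Lemma sum_boolR (p N : nat) : \sum_(0 <= n < N) ((n == p)%:R : R) <= 1.
Proof.
elim: N => [|N IH]; first by rewrite big_geq.
rewrite big_nat_recr //=; have [->|ne] := eqVneq N p; last by rewrite addr0.
suff -> : \sum_(0 <= n < p) ((n == p)%:R : R) = 0 by rewrite add0r.
by apply: big1_seq => n /andP[_]; rewrite mem_index_iota => /andP[_ h]; rewrite (ltn_eqF h).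
Qed.

Lemma l2_delta p : l2 (delta p) /\ nrm (delta p) <= 1.
Proof.
apply: l2_bound => N; rewrite /series /=.
under eq_bigr do rewrite /delta sq_bool; exact: sum_boolR.
Qed.

Lemma inner_delta (w : vec) p : inner w (delta p) = (w p)^*.
Proof.
apply: limnC; apply: (@evconst_cvg _ _ _ p.+1) => k hk.
rewrite /series /= /delta.
under eq_bigr do rewrite eq_sym.
by rewrite sum_delta hk.
Qed.

Variable u : nat -> vec.
Hypothesis ul2 : forall n, l2 (u n).
Hypothesis uon : forall m n, inner (u m) (u n) = (m == n)%:R.

Lemma col_bound p N : series (fun m => sq (u m p)) N <= 1.
Proof.
have [ld nd] := l2_delta p.
apply: le_trans nd; apply: le_trans (bessel ul2 uon N ld); rewrite /series /=.
apply: ler_sum => m _; rewrite /coef inner_delta sq_conj; done.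
Qed.

Definition syn (y : vec) : vec := fun p => limn (series (fun m => y m * u m p)).

Lemma syn_cvg (y : vec) p : l2 y -> series (fun m => y m * u m p) @ \oo --> syn y p.
Proof.
move=> /l2_bnd [My Hy].
have : cvgn (series (fun m => y m * u m p)); last by move=> h; exact: h.
apply: (@cvg_abs _ _ (My + 1)) => N.
apply: le_trans (lerD (Hy N) (col_bound p N)); rewrite /series /= -big_split /=.
apply: ler_sum => i _; exact: ab_mul.
Qed.

Lemma nrm_comb (c : vec) k : nrm (lin c u k) = \sum_(0 <= m < k) sq (c m).
Proof.
apply: complexI; rewrite -(inner_self (l2_comb ul2 (c:=c) (M:=k))) (inner_comb_comb ul2 uon).
by rewrite rmorph_sum; apply: eq_bigr => m _; rewrite conjM_sq.
Qed.

Lemma comb_bound (c : vec) k N : series (fun n => sq (lin c u k n)) N <= \sum_(0 <= m < k) sq (c m).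
Proof. have [_ [h _]] := nrm_facts (l2_comb ul2 (c:=c) (M:=k)); by rewrite -nrm_comb. Qed.

Lemma syn_l2 (y : vec) : l2 y -> l2 (syn y) /\ nrm (syn y) <= nrm y.
Proof.
move=> ly; have [_ [Hy _]] := nrm_facts ly.
apply: l2_bound; apply: (@fatou _ (fun k => lin y u k)) => [p|k N].
  exact: syn_cvg.
by apply: le_trans (comb_bound _ _ _) (Hy k).
Qed.

Definition tl (y : vec) (M : nat) : R := nrm y - series (fun n => sq (y n)) M.

Lemma tl_cvg (y : vec) : l2 y -> tl y @ \oo --> 0.
Proof.
move=> ly; have [h _] := nrm_facts ly; rewrite -(subrr (nrm y)).
apply: cvgB; [exact: cvg_cst | exact: h].
Qed.

Lemma tail_bound (y : vec) M k : l2 y ->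
  \sum_(0 <= m < k) sq (if (M <= m)%N then y m else 0) <= tl y M.
Proof.
move=> ly; have [_ [Hy _]] := nrm_facts ly.
apply: le_trans (_ : \sum_(0 <= m < k + M) sq (if (M <= m)%N then y m else 0) <= _).
  rewrite (big_cat_nat (leq0n k) (leq_addr M k)) /= lerDl.
  by apply: sumr_ge0 => i _; exact: sq_ge0.
rewrite (big_cat_nat (leq0n M) (leq_addl k M)) /= big1_seq ?add0r; last first.
  move=> m /andP[_]; rewrite mem_index_iota => /andP[_ h]; by rewrite leqNgt h /= sq0.
rewrite /tl lerBrDr; apply: le_trans (Hy (k + M)%N).
rewrite /series /= (big_cat_nat (leq0n M) (leq_addl k M)) /= addrC lerD2r.
apply: ler_sum_nat => m /andP[h _]; by rewrite h.
Qed.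

Definition zt (y : vec) M : vec := fun p => syn y p + (-1) * lin y u M p.

Lemma zt_bound (y : vec) M : l2 y -> l2 (zt y M) /\ nrm (zt y M) <= tl y M.
Proof.
move=> ly; apply: l2_bound.
apply: (@fatou _ (fun k => lin (fun m => if (M <= m)%N then y m else 0) u k)) => [p|k N].
  rewrite /zt.
  have -> : (fun k => lin (fun m => if (M <= m)%N then y m else 0) u k p) =
    (fun k => series (fun m => y m * u m p) k + (-1) * series (fun m => (if (m < M)%N then y m else 0) * u m p) k).
    apply: funext => k; rewrite /lin /series /= mulr_sumr -big_split /=; apply: eq_bigr => m _.
    by case: (leqP M m) => _; ring.
  apply: cvg_lin; first exact: syn_cvg.
  apply: (@evconst_cvg _ _ _ M) => k hk; rewrite /series /lin /=.
  rewrite (big_cat_nat (leq0n M) hk) /= [X in _ + X]big1_seq ?addr0; last first.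
    by move=> m /andP[_]; rewrite mem_index_iota => /andP[h _]; rewrite ltnNge h mul0r.
  by apply: eq_big_nat => m /andP[_ h]; rewrite h.
apply: le_trans (comb_bound _ _ _) (tail_bound _ _ ly).
Qed.

Lemma inner_syn (y x : vec) : l2 y -> l2 x -> inner (syn y) x = inner y (coef u x).
Proof.
move=> ly lx.
have [lc _] := coef_l2 ul2 uon lx.
have [ls _] := syn_l2 ly.
apply/esym/limnC.
have e : forall M, series (fun n => (y n)^* * coef u x n) M = inner (syn y) x - inner (zt y M) x.
  move=> M; have [lz _] := zt_bound M ly.
  rewrite /zt (innerDl _ lx ls (l2_comb ul2 (c:=y) (M:=M))) (inner_comb_l ul2 _ _ lx).
  rewrite /series /=; rewrite rmorphN rmorph1 mulN1r; ring.
rewrite (_ : series _ = fun M => inner (syn y) x - inner (zt y M) x); last by apply: funext.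
rewrite -[X in _ --> X]subr0; apply: cvgB; first exact: cvg_cst.
apply: (@small_cvg _ _ (tl y) (nrm x)); [exact: tl_cvg | by have [_ [_ ?]] := nrm_facts lx|].
move=> M t t0; have [lz nz] := zt_bound M ly.
apply: le_trans (inner_bound lz lx t0) _.
by rewrite lerD2r ler_wpM2l ?sqr_ge0.
Qed.

Lemma coef_syn (y : vec) : l2 y -> coef u (syn y) = y.
Proof.
move=> ly; have [ls _] := syn_l2 ly.
apply: funext => m; rewrite /coef (innerC ls (@ul2 m)) (inner_syn ly (@ul2 m)).
by rewrite coef_u // inner_delta conjcK.
Qed.

Lemma nrm_syn (y : vec) : l2 y -> nrm (syn y) = nrm y.
Proof.
move=> ly; have [ls _] := syn_l2 ly; apply: complexI.
by rewrite -(inner_self ls) -(inner_self ly) (inner_syn ly ls) coef_syn.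
Qed.

Lemma syn_lin (y y' : vec) (z : C) : l2 y -> l2 y' ->
  syn (fun n => y n + z * y' n) = fun p => syn y p + z * syn y' p.
Proof.
move=> ly ly'; apply: funext => p; apply: limnC.
rewrite (_ : (fun m => (y m + z * y' m) * u m p) = fun m => y m * u m p + z * (y' m * u m p)); last first.
  by apply: funext => m; ring.
rewrite series_lin; apply: cvg_lin; exact: syn_cvg.
Qed.
End Syn.

Section Kop.
Variable R : realType.
Local Notation C := (R[i]).
Local Notation re := (@complex.Re R).
Local Notation im := (@complex.Im R).
Local Notation vec := (vec R).

Variable K : nat -> nat -> C.
Variable L : R.
Hypothesis L0 : 0 <= L.
Hypothesis HK : forall (c : vec) N M,
  \sum_(0 <= m < M) sq (\sum_(0 <= n < N) K m n * c n) <= L * \sum_(0 <= n < N) sq (c n).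

Definition kop (c : vec) : vec := fun m => limn (series (fun n => K m n * c n)).

Lemma sqR (s : R) : sq (s%:C) = s ^+ 2.
Proof. by rewrite /sq /= expr0n /= addr0. Qed.

Lemma row_bound m N : \sum_(0 <= n < N) sq (K m n) <= L.
Proof.
set s := \sum_(0 <= n < N) sq (K m n).
have s0 : 0 <= s by apply: sumr_ge0 => i _; exact: sq_ge0.
have := HK (fun n => (K m n)^*) N m.+1.
rewrite big_nat_recr //=.
have -> : \sum_(0 <= n < N) K m n * (K m n)^* = s%:C.
  rewrite /s rmorph_sum; apply: eq_bigr => n _; by rewrite mulrC conjM_sq.
rewrite sqR.
have -> : \sum_(0 <= n < N) sq (K m n)^* = s by apply: eq_bigr => n _; rewrite sq_conj.
have h : 0 <= \sum_(0 <= i < m) sq (\sum_(0 <= n < N) K i n * (K m n)^*).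
  by apply: sumr_ge0 => i _; exact: sq_ge0.
move=> h2; have h3 : s ^+ 2 <= L * s by lra.
have [->|sn] := eqVneq s 0; first by [].
have sp : 0 < s by rewrite lt_def sn s0.
by rewrite -(ler_pM2r sp) -expr2.
Qed.

Lemma kop_cvg (c : vec) m : l2 c -> series (fun n => K m n * c n) @ \oo --> kop c m.
Proof.
move=> /l2_bnd [Mc Hc].
have : cvgn (series (fun n => K m n * c n)); last by move=> h; exact: h.
apply: (@cvg_abs _ _ (L + Mc)) => N.
apply: le_trans (lerD (row_bound m N) (Hc N)); rewrite /series /= -big_split /=.
apply: ler_sum => i _; exact: ab_mul.
Qed.

Lemma kop_l2 (c : vec) : l2 c -> l2 (kop c) /\ nrm (kop c) <= L * nrm c.
Proof.
move=> lc; have [_ [Hc _]] := nrm_facts lc.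
apply: l2_bound; apply: (@fatou _ (fun k m => series (fun n => K m n * c n) k)) => [p|k N].
  exact: kop_cvg.
apply: le_trans (HK c k N) _; apply: ler_wpM2l => //; exact: Hc.
Qed.

Lemma kop_lin (c c' : vec) (z : C) : l2 c -> l2 c' ->
  kop (fun n => c n + z * c' n) = fun m => kop c m + z * kop c' m.
Proof.
move=> lc lc'; apply: funext => m; apply: limnC.
rewrite (_ : (fun n => K m n * (c n + z * c' n)) = fun n => K m n * c n + z * (K m n * c' n)); last first.
  by apply: funext => n; ring.
rewrite series_lin; apply: cvg_lin; exact: kop_cvg.
Qed.

Lemma kop_delta (n : nat) : kop (@delta R n) = fun m => K m n.
Proof.
apply: funext => m; apply: limnC; apply: (@evconst_cvg _ _ _ n.+1) => k hk.
rewrite /series /= /delta.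
under eq_bigr do rewrite eq_sym.
by rewrite sum_delta hk.
Qed.

Definition tr (N : nat) (c : vec) : vec := fun n => if (n < N)%N then c n else 0.

Lemma kop_tr (c : vec) N m : kop (tr N c) m = \sum_(0 <= n < N) K m n * c n.
Proof.
apply: limnC; apply: (@evconst_cvg _ _ _ N) => k hk.
rewrite /series /= /tr (big_cat_nat (leq0n N) hk) /= [X in _ + X]big1_seq ?addr0; last first.
  by move=> i /andP[_]; rewrite mem_index_iota => /andP[h _]; rewrite ltnNge h mulr0.
by apply: eq_big_nat => i /andP[_ h]; rewrite h.
Qed.
End Kop.

Section Adj.
Variable R : realType.
Local Notation C := (R[i]).
Local Notation re := (@complex.Re R).
Local Notation im := (@complex.Im R).
Local Notation vec := (vec R).

Lemma ab_conj (z : C) : ab z^* = ab z.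
Proof. by case: z => a b; rewrite /ab /= normrN. Qed.

Lemma re_le_ab (z : C) : re z <= ab z.
Proof. exact: le_trans (ler_norm _) (ab_re _). Qed.

Lemma conjK (z : C) : z^*^* = z.
Proof. by case: z => a b; rewrite /= opprK. Qed.

Lemma sum_cvgC (g : nat -> nat -> C) (h : nat -> C) N :
  (forall n, (fun k => g k n) @ \oo --> h n) ->
  (fun k => \sum_(0 <= n < N) g k n) @ \oo --> \sum_(0 <= n < N) h n.
Proof.
move=> H; elim: N => [|N IH].
  rewrite (big_geq (leqnn 0)) (_ : (fun k => _) = fun=> 0); first exact: cvg_cst.
  by apply: funext => k; rewrite big_geq.
rewrite big_nat_recr /=; last done.
rewrite (_ : (fun k => _) = fun k => \sum_(0 <= n < N) g k n + g k N).
  by apply: cvgD; [exact: IH | exact: H].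
by apply: funext => k; rewrite big_nat_recr.
Qed.

Lemma small_inner (x : vec) (y : nat -> vec) (b : nat -> R) :
  l2 x -> (forall N, l2 (y N)) -> (forall N, nrm (y N) <= b N) -> b @ \oo --> 0 ->
  (fun N => inner x (y N)) @ \oo --> 0.
Proof.
move=> lx ly nb hb.
apply: (@small_cvg _ _ b (nrm x)); [exact: hb | by have [_ [_ ?]] := nrm_facts lx|].
move=> N t t0; rewrite (innerC (ly N) lx) ab_conj.
apply: le_trans (inner_bound (ly N) lx t0) _.
by rewrite lerD2r ler_wpM2l ?sqr_ge0.
Qed.

Variable K : nat -> nat -> C.
Hypothesis HK : forall (c : vec) N M,
  \sum_(0 <= m < M) sq (\sum_(0 <= n < N) K m n * c n) <= 1 * \sum_(0 <= n < N) sq (c n).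

Definition Kd : nat -> nat -> C := fun n m => (K m n)^*.

Lemma HKd (d : vec) N M :
  \sum_(0 <= n < M) sq (\sum_(0 <= m < N) Kd n m * d m) <= 4 * \sum_(0 <= m < N) sq (d m).
Proof.
set w := fun n => \sum_(0 <= m < N) Kd n m * d m.
set s := \sum_(0 <= n < M) sq (w n).
set v := fun m => \sum_(0 <= n < M) K m n * w n.
have hv : \sum_(0 <= m < N) sq (v m) <= s by have := HK w M N; rewrite mul1r.
have ident : s%:C = \sum_(0 <= m < N) (d m)^* * v m.
  rewrite /s rmorph_sum.
  rewrite (eq_bigr (fun i => (w i)^* * w i)); last by move=> i _; rewrite conjM_sq.
  have ew : forall n, (w n)^* = \sum_(0 <= m < N) K m n * (d m)^*.
    move=> n; rewrite /w rmorph_sum; apply: eq_bigr => m _.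
    by rewrite /Kd; case: (K m n) (d m) => a b [c e] /=; congr (_ +i* _); ring.
  transitivity (\sum_(0 <= i < M) \sum_(0 <= m < N) K m i * (d m)^* * w i).
    by apply: eq_bigr => i _; rewrite -mulr_suml; congr (_ * _); apply: ew.
  rewrite exchange_big_nat /=; apply: eq_bigr => m _.
  rewrite /v mulr_sumr; apply: eq_bigr => n _; ring.
have h1 : 2 * s <= \sum_(0 <= m < N) (2 * ab ((d m)^* * v m)).
  have -> : s = re (s%:C) by [].
  rewrite ident re_sum mulr_sumr; apply: ler_sum => m _.
  by rewrite ler_pM2l // re_le_ab.
have h2 : \sum_(0 <= m < N) (2 * ab ((d m)^* * v m)) <= 4 * \sum_(0 <= m < N) sq (d m) + s.
  apply: le_trans (_ : \sum_(0 <= m < N) (4 * sq (d m) + sq (v m)) <= _).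
    apply: ler_sum => m _; have := @ab_conjM _ (d m) (v m) 2 (ler0n R 2).
    by rewrite (_ : (2 : R) ^+ 2 = 4) //; rewrite expr2 -natrM.
  by rewrite big_split /= -mulr_sumr lerD2l.
lra.
Qed.
End Adj.

Section Adj2.
Variable R : realType.
Local Notation C := (R[i]).
Local Notation vec := (vec R).

Lemma inner_tr (x c : vec) N : inner x (tr N c) = \sum_(0 <= n < N) (x n)^* * c n.
Proof.
apply: limnC; apply: (@evconst_cvg _ _ _ N) => k hk.
rewrite /series /= /tr (big_cat_nat (leq0n N) hk) /= [X in _ + X]big1_seq ?addr0; last first.
  by move=> i /andP[_]; rewrite mem_index_iota => /andP[h _]; rewrite ltnNge h mulr0.
by apply: eq_big_nat => i /andP[_ h]; rewrite h.
Qed.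

Definition rt (N : nat) (c : vec) : vec := fun n => c n + (-1) * tr N c n.

Lemma rt_facts (c : vec) N : l2 c -> l2 (tr N c) /\ l2 (rt N c) /\ nrm (rt N c) <= tl c N /\
  tr N c = (fun n => c n + (-1) * rt N c n).
Proof.
move=> lc; have [_ [Hc _]] := nrm_facts lc.
have ltr : l2 (tr N c).
  apply/l2P; exists (nrm c) => k; apply: le_trans (Hc k); rewrite /series /=.
  by apply: ler_sum => n _; rewrite /tr; case: ifP => _; rewrite ?sq0 ?sq_ge0.
have lrt : l2 (rt N c) by apply: l2_lin; [exact: lc | exact: ltr].
split => //; split => //; split.
  apply: nrm_le => k; apply: le_trans (tail_bound N k lc); rewrite /series /=.
  by apply: ler_sum => n _; rewrite /rt /tr; case: (leqP N n) => _; rewrite le_eqVlt; apply/orP; left; apply/eqP; congr sq; ring.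
by apply: funext => n; rewrite /rt; ring.
Qed.

Variable K : nat -> nat -> C.
Hypothesis HK : forall (c : vec) N M,
  \sum_(0 <= m < M) sq (\sum_(0 <= n < N) K m n * c n) <= 1 * \sum_(0 <= n < N) sq (c n).

Lemma adj (c d : vec) : l2 c -> l2 d -> inner (kop (Kd K) d) c = inner d (kop K c).
Proof.
move=> lc ld.
have HKd' := HKd HK.
have [lx _] := kop_l2 (ler0n R 4) HKd' ld.
set x := kop (Kd K) d.
have eqN : forall N, inner x (tr N c) = inner d (kop K (tr N c)).
  move=> N; rewrite inner_tr; apply/esym/limnC.
  have [ltr _] := rt_facts N lc.
  have [lk _] := kop_l2 ler01 HK ltr.
  rewrite (_ : series _ = fun k => \sum_(0 <= n < N) (series (fun m => Kd K n m * d m) k)^* * c n).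
    apply: sum_cvgC => n; apply: cvgM; last exact: cvg_cst.
    apply: conj_cvg; exact: (kop_cvg (ler0n R 4) HKd').
  apply: funext => k; rewrite /series /=.
  under eq_bigr do rewrite kop_tr.
  transitivity (\sum_(0 <= n < N) \sum_(0 <= m < k) K m n * (d m)^* * c n); last first.
    apply: eq_bigr => n _; rewrite rmorph_sum mulr_suml; apply: eq_bigr => m _.
    by rewrite /Kd; case: (K m n) (d m) (c n) => a b [e f] [g h] /=; congr (_ +i* _); ring.
  rewrite exchange_big_nat /=; apply: eq_bigr => m _.
  rewrite mulr_sumr; apply: eq_bigr => n _; ring.
have cvA : (fun N => inner x (tr N c)) @ \oo --> inner x c.
  rewrite (_ : (fun N => inner x (tr N c)) = fun N => inner x c + (-1) * inner x (rt N c)).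
    rewrite -[X in _ --> X]addr0 -[X in _ + X](mulr0 (-1)).
    apply: cvg_lin; first exact: cvg_cst.
    apply: (@small_inner _ _ _ (tl c)); [exact: lx | | | exact: tl_cvg].
      by move=> N; have [_ [? _]] := rt_facts N lc.
    by move=> N; have [_ [_ [? _]]] := rt_facts N lc.
  apply: funext => N; have [_ [lr [_ e]]] := rt_facts N lc.
  by rewrite [in LHS]e (innerDr _ lx lc lr).
have cvB : (fun N => inner d (kop K (tr N c))) @ \oo --> inner d (kop K c).
  have [lkc _] := kop_l2 ler01 HK lc.
  rewrite (_ : (fun N => inner d (kop K (tr N c))) = fun N => inner d (kop K c) + (-1) * inner d (kop K (rt N c))).
    rewrite -[X in _ --> X]addr0 -[X in _ + X](mulr0 (-1)).
    apply: cvg_lin; first exact: cvg_cst.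
    apply: (@small_inner _ _ _ (tl c)); [exact: ld | | | exact: tl_cvg].
      by move=> N; have [_ [lr _]] := rt_facts N lc; have [? _] := kop_l2 ler01 HK lr.
    move=> N; have [_ [lr [nr _]]] := rt_facts N lc; have [_ nk] := kop_l2 ler01 HK lr.
    by apply: le_trans nk _; rewrite mul1r.
  apply: funext => N; have [_ [lr [_ e]]] := rt_facts N lc.
  have [lkr _] := kop_l2 ler01 HK lr.
  by rewrite e (kop_lin ler01 HK _ lc lr) (innerDr _ ld lkc lkr).
rewrite -(limnC cvA) -(limnC cvB).
by congr (limn _); apply: funext => N; exact: eqN.
Qed.
End Adj2.

Section Op.
Variable R : realType.
Local Notation C := (R[i]).
Local Notation vec := (vec R).
Variables u v : nat -> vec.
Hypothesis ul2 : forall n, l2 (u n).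
Hypothesis uon : forall m n, inner (u m) (u n) = (m == n)%:R.
Hypothesis vl2 : forall n, l2 (v n).
Hypothesis von : forall m n, inner (v m) (v n) = (m == n)%:R.
Variable Kx : nat -> nat -> C.
Variable L : R.
Hypothesis L0 : 0 <= L.
Hypothesis HKx : forall (c : vec) N M,
  \sum_(0 <= m < M) sq (\sum_(0 <= n < N) Kx m n * c n) <= L * \sum_(0 <= n < N) sq (c n).

Definition opr (x : vec) : vec := syn v (kop Kx (coef u x)).

Lemma opr_l2 (x : vec) : l2 x -> l2 (opr x) /\ nrm (opr x) <= L * nrm x.
Proof.
move=> lx; have [lc nc] := coef_l2 ul2 uon lx.
have [lk nk] := kop_l2 L0 HKx lc.
have [ls _] := syn_l2 vl2 von lk.
split => //; rewrite /opr (nrm_syn vl2 von lk).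
by apply: le_trans nk _; rewrite ler_wpM2l.
Qed.

Lemma opr_bounded : is_bounded opr.
Proof.
split; first by move=> x lx; have [] := opr_l2 lx.
split.
  move=> x y z lx ly; rewrite /opr.
  have [lcx _] := coef_l2 ul2 uon lx; have [lcy _] := coef_l2 ul2 uon ly.
  have [lkx _] := kop_l2 L0 HKx lcx; have [lky _] := kop_l2 L0 HKx lcy.
  rewrite (coef_lin ul2 _ lx ly) (kop_lin L0 HKx _ lcx lcy) (syn_lin vl2 von _ lkx lky).
  done.
exists L => x lx; have [lo no] := opr_l2 lx.
rewrite (inner_self lo) (inner_self lx) -rmorphM lecR; exact: no.
Qed.

Lemma opr_mat m n : inner (v m) (opr (u n)) = Kx m n.
Proof.
rewrite /opr (coef_u uon n).
have -> : (fun k => (k == n)%:R) = @delta R n by [].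
rewrite kop_delta.
have [lk _] := kop_l2 L0 HKx (proj1 (@l2_delta R n)).
rewrite kop_delta in lk.
have := coef_syn vl2 von lk => /(congr1 (fun g => g m)).
by rewrite /coef.
Qed.
End Op.

Section Main.
Variable R : realType.
Local Notation C := (R[i]).
Local Notation vec := (vec R).

Definition unitg (m : nat) : seq C := mkseq (fun i => (i == m)%:R) m.+1.

Lemma sandw_unit (F : mat R) m (a : seq C) :
  sandw F (unitg m) a = \sum_(n < size a) F m n * a`_n.
Proof.
rewrite /sandw /unitg size_mkseq big_ord_recr /= big1 ?add0r.
  apply: eq_bigr => n _; rewrite nth_mkseq // eqxx.
  by rewrite conjC1 mul1r.
move=> i _; apply: big1 => n _; rewrite nth_mkseq; last by rewrite ltnS ltnW.
by rewrite (ltn_eqF (ltn_ord i)) conjC0 !mul0r.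
Qed.

Lemma sandw_unit2 (F : mat R) m : sandw F (unitg m) (unitg m) = F m m.
Proof.
rewrite sandw_unit /unitg size_mkseq big_ord_recr /= big1 ?add0r.
  by rewrite nth_mkseq // eqxx mulr1.
move=> i _; rewrite nth_mkseq; last by rewrite ltnS ltnW.
by rewrite (ltn_eqF (ltn_ord i)) mulr0.
Qed.

Lemma sq_eq0 (z : C) : sq z = 0 -> z = 0.
Proof.
case: z => a b; rewrite /sq /= => h.
have ha : a ^+ 2 = 0 by apply/eqP; rewrite eq_le sqr_ge0 andbT; have := sqr_ge0 b; lra.
have hb : b ^+ 2 = 0 by apply/eqP; rewrite eq_le sqr_ge0 andbT; have := sqr_ge0 a; lra.
move/eqP: ha; rewrite sqrf_eq0 => /eqP ->; move/eqP: hb; rewrite sqrf_eq0 => /eqP -> //.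
Qed.

Lemma derive_HK (f : nat -> vec) (Q : mat R -> mat R) (K : nat -> mat R) alpha :
  (forall a a' g h : seq C,
      series (fun alpha => sandw (K alpha) g a * (sandw (K alpha) h a')^*) @ \oo
        --> sandw (Q (rank1 a a')) g h) ->
  (forall (N : nat) (c : mat R), supported N c ->
      exists T : op R, trace_class f T /\
        (forall m n, inner (f m) (T (f n)) = Q c m n) /\
        trace f T = \sum_(k < N) c k k) ->
  forall (c : vec) N M,
  \sum_(0 <= m < M) sq (\sum_(0 <= n < N) K alpha m n * c n) <= 1 * \sum_(0 <= n < N) sq (c n).
Proof.
move=> Hrep Htr c N M; rewrite mul1r.
set a := mkseq c N.
set s := \sum_(0 <= n < N) sq (c n).
set c' := rank1 a a.
have supp : supported N c'.
  move=> k l hkl; rewrite /c' /rank1.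
  case: hkl => h.
    by rewrite (@nth_default _ 0 a k) ?size_mkseq // mul0r.
  by rewrite (@nth_default _ 0 a l) ?size_mkseq // ?conjC0 ?rmorph0 mulr0.
have [T [_ [HT Htrace]]] := Htr N c' supp.
have trs : \sum_(k < N) c' k k = s%:C.
  rewrite /s rmorph_sum big_mkord; apply: eq_bigr => k _.
  by rewrite /c' /rank1 nth_mkseq // mulrC conjM_sq.
set w := fun b m => \sum_(0 <= n < N) K b m n * c n.
have wq : forall m, series (fun b => sq (w b m)) @ \oo --> complex.Re (Q c' m m).
  move=> m; apply: cvg_seriesR'.
  have := Hrep a a (unitg m) (unitg m); rewrite sandw_unit2.
  have -> : (fun b => sandw (K b) (unitg m) a * (sandw (K b) (unitg m) a)^*) = (fun b => (sq (w b m))%:C).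
    apply: funext => b; rewrite sandw_unit /w size_mkseq big_mkord.
    rewrite mulrC conjM_sq; congr (sq _)%:C; apply: eq_bigr => n _; by rewrite nth_mkseq.
  done.
have wqa : forall m, sq (w alpha m) <= complex.Re (Q c' m m).
  move=> m; have h := wq m.
  have nd : nondecreasing_seq (series (fun b => sq (w b m))).
    by move=> p q pq; apply: (@nondecreasing_series _ _ xpredT 0) => // k _ _; apply: sq_ge0.
  rewrite -(cvg_lim _ h) //; apply: le_trans (nondecreasing_cvgn_le nd (cvgP _ h) alpha.+1).
  by rewrite /series /= big_nat_recr //= lerDr; apply: sumr_ge0 => i _; exact: sq_ge0.
have [s0|sn] := eqVneq s 0.
  have c0 : forall n, (n < N)%N -> c n = 0.
    move=> n hn; apply: sq_eq0; move/eqP: s0; rewrite /s psumr_eq0; last by move=> i _; exact: sq_ge0.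
    by move/allP => /(_ n); rewrite mem_index_iota hn => /(_ isT) /eqP.
  have z : forall m, sq (\sum_(0 <= n < N) K alpha m n * c n) = 0.
    move=> m; rewrite big1_seq ?sq0 // => n /andP[_]; rewrite mem_index_iota => /andP[_ hn].
    by rewrite c0 // mulr0.
  by rewrite s0 big1 // => m _; exact: z.
have cv : series (fun n => Q c' n n) @ \oo --> s%:C.
  have e : series (fun n => Q c' n n) = series (fun n => inner (f n) (T (f n))).
    by apply: funext => k; rewrite /series /=; apply: eq_bigr => n _; rewrite HT.
  have cv' : cvgn (series (fun n => Q c' n n)).
    apply: contrapT => ncv; move: Htrace; rewrite /trace -e trs /lim /lim_in getPN.
      by move/complexI => /eqP; rewrite eq_sym (negPf sn).
    move=> l hl; apply: ncv; apply/cvg_ex; exists l; exact: hl.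
  have := cv'; rewrite /trace in Htrace; rewrite e Htrace trs in cv' *.
  by move=> _; exact: cv'.
move/series_cvgC: cv => [cvR0 _].
have cvR : series (fun n => complex.Re (Q c' n n)) @ \oo --> s := cvR0.
have qge0 : forall n, 0 <= complex.Re (Q c' n n) by move=> n; apply: le_trans (wqa n); exact: sq_ge0.
have nd : nondecreasing_seq (series (fun n => complex.Re (Q c' n n))).
  by move=> p q pq; apply: (@nondecreasing_series _ _ xpredT 0) => // k _ _; apply: qge0.
apply: le_trans (_ : series (fun n => complex.Re (Q c' n n)) M <= s).
  by rewrite /series /=; apply: ler_sum => m _; exact: wqa.
rewrite -(cvg_lim _ cvR) //; apply: nondecreasing_cvgn_le nd (cvgP _ cvR) M.
Qed.
End Main.

Theorem corollary6p5 (R : realType)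
  (e f : nat -> vec R)
  (Q : mat R -> mat R)
  (K : nat -> mat R) :
  is_ONB e -> is_ONB f ->
  (* Q is linear on D_e^2 *)
  (forall (N : nat) (c c' : mat R) (z : R[i]),
      supported N c -> supported N c' ->
      Q (fun k l => c k l + z * c' k l) = (fun m n => Q c m n + z * Q c' m n)) ->
  (* Q is completely positive *)
  (forall (n : nat) (phi psi : 'I_n -> seq R[i]),
      0 <= \sum_(k < n) \sum_(l < n) sandw (Q (rank1 (phi k) (phi l))) (psi k) (psi l)) ->
  (* Q(rho) = sum_alpha K_alpha rho K_alpha^dagger *)
  (forall a a' g h : seq R[i],
      series (fun alpha => sandw (K alpha) g a * (sandw (K alpha) h a')^*) @ \oo
        --> sandw (Q (rank1 a a')) g h) ->
  (* Q is trace preserving *)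
  (forall (N : nat) (c : mat R), supported N c ->
      exists T : op R, trace_class f T /\
        (forall m n, inner (f m) (T (f n)) = Q c m n) /\
        trace f T = \sum_(k < N) c k k) ->
  forall alpha : nat,
    exists B Bs : op R,
      is_bounded B /\
      (forall m n, inner (f m) (B (e n)) = K alpha m n) /\
      is_adjoint B Bs /\
      (forall m n, inner (e n) (Bs (f m)) = (K alpha m n)^*).
Proof.
move=> [el2 [eon _]] [fl2 [fon _]] _ _ Hrep Htr alpha.
have HK := derive_HK alpha Hrep Htr.
have HKd := HKd HK.
exists (opr e f (K alpha)), (opr f e (Kd (K alpha))).
split; first exact: (opr_bounded el2 eon fl2 fon ler01 HK).
split; first by move=> m n; exact: (opr_mat eon fl2 fon ler01 HK).
split; last first.
  by move=> m n; rewrite (opr_mat fon el2 eon (ler0n R 4) HKd).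
split; first exact: (opr_bounded fl2 fon el2 eon (ler0n R 4) HKd).
move=> x y lx ly.
have [lce _] := coef_l2 el2 eon lx.
have [lcf _] := coef_l2 fl2 fon ly.
have [lk _] := kop_l2 ler01 HK lce.
have [lkd _] := kop_l2 (ler0n R 4) HKd lcf.
have [ls _] := syn_l2 fl2 fon lk.
rewrite /opr (inner_syn el2 eon lkd lx) (adj HK lce lcf).
rewrite (innerC ls ly) (inner_syn fl2 fon lk ly) -(innerC lk lcf).
done.
Qed.
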